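(* Let $\Gamma$ be a finite group, let $\mathcal{A},\mathcal{A}'$ be additive categories, let $\Gamma$ pseudo-act on $\mathcal{A}'$, and let $f^*:\mathcal{A}\to\mathcal{A}'$ be an additive functor which is $\Gamma$-equivariant for the trivial action on $\mathcal{A}$ (all as explained in the context). (a) If $f^*$ has descent, then $f^*$ is Cartesian and admits a trace structure. (b) Conversely, if $\mathcal{A}$ is pseudo-abelian (idempotent complete) and $\mathbf{Z}[1/|\Gamma|]$-linear, and $f^*$ is Cartesian and admits a trace structure, then $f^*$ has descent.
   Context: A pseudo-action of $\Gamma$ on $\mathcal{A}'$ consists of additive functors $g^*:\mathcal{A}'\to\mathcal{A}'$ ($g\in\Gamma$) and natural isomorphisms $c_{g,h}:h^*g^*\Rightarrow (gh)^*$ satisfying the usual coherence conditions. $\Gamma$-equivariance of $f^*$ means we are given natural isomorphisms $i_g:g^*f^*\Rightarrow f^*$ compatible with the $c_{g,h}$. A descent datum is a pair $(C,(b_g)_{g\in\Gamma})$ with $C\in\mathcal{A}'$ and isomorphisms $b_g:g^*C\to C$ such that $b_h\circ h^*(b_g)=b_{gh}\circ c_{g,h}(C)$ for all $g,h$; a morphism $(C,(b_g))\to(D,(b'_g))$ is a morphism $\phi:C\to D$ with $\phi\circ b_g=b'_g\circ g^*\phi$ for all $g$. These form a category $\mathcal{A}'[\Gamma]$, and $\hat f^*:\mathcal{A}\to\mathcal{A}'[\Gamma]$ sends $A$ to $(f^*A,(i_g(A))_g)$. We say $f^*$ has descent if $\hat f^*$ is an equivalence of categories. Suppose $f^*$ has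 a right adjoint $f_*$ with unit $\eta$ and counit $\epsilon$. For $C\in\mathcal{A}'$ let $\kappa_C:f^*f_*C\to\bigoplus_{g\in\Gamma}g^*C$ be the morphism whose $g$-component is $g^*(\epsilon_C)\circ i_g(f_*C)^{-1}$. $f^*$ is called Cartesian if $f_*$ exists and $\kappa_C$ is an isomorphism for every $C$. For a descent datum $(C,(b_g))$ put $u_C=(\bigoplus_g b_g)\circ\kappa_C:f^*f_*C\to\bigoplus_{g\in\Gamma}C$; for $C=f^*A$ the descent datum used is $(i_g(A))$. A trace structure on a Cartesian $f^*$ is a natural transformation $\operatorname{tr}:f_*f^*\Rightarrow\operatorname{Id}_{\mathcal{A}}$ such that for every $A\in\mathcal{A}$: (1) $\operatorname{tr}_A\circ\eta_A=|\Gamma|\cdot 1_A$; (2) $f^*(\operatorname{tr}_A)=\Sigma\circ u_{f^*A}$, where $\Sigma:\bigoplus_{g\in\Gamma}f^*A\to f^*A$ is the sum map. *)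

(* Defs.v *)
From HB Require Import structures.
From mathcomp Require Import all_boot all_order all_algebra all_fingroup.
From Stdlib Require Import ProofIrrelevance.
Set Implicit Arguments. Unset Strict Implicit. Unset Printing Implicit Defensive.
Import GRing.Theory.
Local Open Scope ring_scope.

Record Cat := {
  cobj :> Type;
  chom : cobj -> cobj -> Type;
  cid : forall a, chom a a;
  ccomp : forall a b c, chom b c -> chom a b -> chom a c;
  ccompA : forall a b c d (h : chom c d) (g : chom b c) (f : chom a b),
      ccomp h (ccomp g f) = ccomp (ccomp h g) f;
  ccomp1f : forall a b (f : chom a b), ccomp (cid b) f = f;
  ccompf1 : forall a b (f : chom a b), ccomp f (cid a) = f }.
Arguments cid {c} a : rename.
Arguments ccomp {c a b c0} : rename.
Arguments chom : clear implicits.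

Definition is_iso (C : Cat) (a b : C) (f : chom C a b) : Prop :=
  exists g : chom C b a, ccomp g f = cid a /\ ccomp f g = cid b.

Record Functor (C D : Cat) := {
  fobj :> C -> D;
  fmap : forall a b, chom C a b -> chom D (fobj a) (fobj b);
  fmap_id : forall a, fmap (cid a) = cid (fobj a);
  fmap_comp : forall a b c (g : chom C b c) (f : chom C a b),
      fmap (ccomp g f) = ccomp (fmap g) (fmap f) }.
Arguments fmap {C D} F {a b} : rename.

Section FunctorOps.
Variables C D E : Cat.
Definition Fid : Functor C C.
Proof. by refine {| fobj := fun a => a; fmap := fun a b f => f |}. Defined.

Definition Fcomp (G : Functor D E) (F : Functor C D) : Functor C E.
Proof.
refine {| fobj := fun a => G (F a); fmap := fun a b f => fmap G (fmap F f) |}.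
- by move=> a; rewrite (fmap_id F) (fmap_id G).
- by move=> a b c g f; rewrite (fmap_comp F) (fmap_comp G).
Defined.
End FunctorOps.

Definition natural (C D : Cat) (F G : Functor C D)
  (alpha : forall a : C, chom D (F a) (G a)) : Prop :=
  forall a b (f : chom C a b), ccomp (fmap G f) (alpha a) = ccomp (alpha b) (fmap F f).

Definition nat_isomorphic (C D : Cat) (F G : Functor C D) : Prop :=
  exists alpha : forall a : C, chom D (F a) (G a),
    natural alpha /\ forall a, is_iso (alpha a).

Definition equivalence (C D : Cat) (F : Functor C D) : Prop :=
  exists G : Functor D C,
    nat_isomorphic (Fcomp G F) (Fid C) /\ nat_isomorphic (Fcomp F G) (Fid D).

Record PreAdd := {
  pobj :> Type;
  phom : pobj -> pobj -> zmodType;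
  pid : forall a, phom a a;
  pcomp : forall a b c, phom b c -> phom a b -> phom a c;
  pcompA : forall a b c d (h : phom c d) (g : phom b c) (f : phom a b),
      pcomp h (pcomp g f) = pcomp (pcomp h g) f;
  pcomp1f : forall a b (f : phom a b), pcomp (pid b) f = f;
  pcompf1 : forall a b (f : phom a b), pcomp f (pid a) = f;
  pcompDl : forall a b c (g1 g2 : phom b c) (f : phom a b),
      pcomp (g1 + g2) f = pcomp g1 f + pcomp g2 f;
  pcompDr : forall a b c (g : phom b c) (f1 f2 : phom a b),
      pcomp g (f1 + f2) = pcomp g f1 + pcomp g f2 }.
Arguments pid {p} a : rename.
Arguments pcomp {p a b c} : rename.
Arguments phom : clear implicits.

Definition PCat (A : PreAdd) : Cat :=
  {| cobj := A; chom := fun a b => (phom A a b : Type);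
     cid := @pid A; ccomp := @pcomp A;
     ccompA := @pcompA A; ccomp1f := @pcomp1f A; ccompf1 := @pcompf1 A |}.

Record biproduct (A : PreAdd) (I : finType) (X : I -> A) := {
  bp_obj : A;
  bp_inj : forall i, phom A (X i) bp_obj;
  bp_proj : forall i, phom A bp_obj (X i);
  bp_projinj : forall i, pcomp (bp_proj i) (bp_inj i) = pid (X i);
  bp_proj_inj0 : forall i j, i != j -> pcomp (bp_proj i) (bp_inj j) = 0;
  bp_sum : \sum_i pcomp (bp_inj i) (bp_proj i) = pid bp_obj }.

Definition additive_cat (A : PreAdd) : Prop :=
  forall (I : finType) (X : I -> A), inhabited (biproduct X).

Definition additive_functor (A B : PreAdd) (F : Functor (PCat A) (PCat B)) : Prop :=
  forall a b (x y : phom A a b),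
    (fmap F (x + y) : phom B (F a) (F b)) = fmap F x + fmap F y.

Definition pseudo_abelian (A : PreAdd) : Prop :=
  forall a (e : phom A a a), pcomp e e = e ->
    exists b (r : phom A a b) (s : phom A b a), pcomp r s = pid b /\ pcomp s r = e.

(* Z[1/n]-linear: every Hom group is a Z[1/n]-module, i.e. n acts bijectively *)
Definition Zinv_linear (n : nat) (A : PreAdd) : Prop :=
  forall a b, bijective (fun x : phom A a b => x *+ n).

Section PseudoAction.
Variables (Gam : finGroupType) (A' : PreAdd).

Definition act_cast (act : Gam -> Functor (PCat A') (PCat A')) (g g' : Gam)
  (e : g = g') (X : A') : phom A' (act g X) (act g' X) :=
  match e in _ = g' return phom A' (act g X) (act g' X) with
  | erefl => pid (act g X) end.

Record pseudo_action := {
  pa_fun :> Gam -> Functor (PCat A') (PCat A');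
  pa_add : forall g, additive_functor (pa_fun g);
  pa_c : forall (g h : Gam) (X : A'),
      phom A' (pa_fun h (pa_fun g X)) (pa_fun (g * h)%g X);
  pa_c_nat : forall g h (X Y : A') (phi : phom A' X Y),
      pcomp (fmap (pa_fun (g * h)%g) phi) (pa_c g h X)
      = pcomp (pa_c g h Y) (fmap (pa_fun h) (fmap (pa_fun g) phi));
  pa_c_iso : forall g h X, is_iso (C := PCat A') (pa_c g h X);
  pa_e : forall X : A', phom A' (pa_fun 1%g X) X;
  pa_e_nat : forall (X Y : A') (phi : phom A' X Y),
      pcomp phi (pa_e X) = pcomp (pa_e Y) (fmap (pa_fun 1%g) phi);
  pa_e_iso : forall X, is_iso (C := PCat A') (pa_e X);
  pa_assoc : forall g h k (X : A'),
      pcomp (act_cast pa_fun (esym (mulgA g h k)) X)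
            (pcomp (pa_c (g * h)%g k X) (fmap (pa_fun k) (pa_c g h X)))
      = pcomp (pa_c g (h * k)%g X) (pa_c h k (pa_fun g X));
  pa_unit_r : forall g (X : A'),
      pcomp (act_cast pa_fun (mulg1 g) X) (pa_c g 1%g X) = pa_e (pa_fun g X);
  pa_unit_l : forall h (X : A'),
      pcomp (act_cast pa_fun (mul1g h) X) (pa_c 1%g h X) = fmap (pa_fun h) (pa_e X) }.
End PseudoAction.

Record equivariance (Gam : finGroupType) (A A' : PreAdd) (pa : pseudo_action Gam A')
    (f : Functor (PCat A) (PCat A')) := {
  eq_i : forall (g : Gam) (a : A), phom A' (pa g (f a)) (f a);
  eq_iinv : forall (g : Gam) (a : A), phom A' (f a) (pa g (f a));
  eq_i_nat : forall g (a b : A) (phi : phom A a b),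
      pcomp (fmap f phi : phom A' _ _) (eq_i g a)
      = pcomp (eq_i g b) (fmap (pa g) (fmap f phi));
  eq_i_inv1 : forall g a, pcomp (eq_iinv g a) (eq_i g a) = pid _;
  eq_i_inv2 : forall g a, pcomp (eq_i g a) (eq_iinv g a) = pid _;
  eq_i_coc : forall g h a,
      pcomp (eq_i (g * h)%g a) (pa_c pa g h (f a))
      = pcomp (eq_i h a) (fmap (pa h) (eq_i g a)) }.

Lemma sig_eqP (T : Type) (P : T -> Prop) (x y : sig P) :
  proj1_sig x = proj1_sig y -> x = y.
Proof.
case: x y => [x px] [y py] /= exy; subst y.
by rewrite (proof_irrelevance _ px py).
Qed.

Section Descent.
Variables (Gam : finGroupType) (A' : PreAdd) (pa : pseudo_action Gam A').

Record ddatum := {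
  dd_obj : A';
  dd_b : forall g : Gam, phom A' (pa g dd_obj) dd_obj;
  dd_iso : forall g, is_iso (C := PCat A') (dd_b g);
  dd_coc : forall g h : Gam,
      pcomp (dd_b h) (fmap (pa h) (dd_b g)) = pcomp (dd_b (g * h)%g) (pa_c pa g h dd_obj) }.

Definition ddhom (D E : ddatum) : Type :=
  { phi : phom A' (dd_obj D) (dd_obj E) |
    forall g, pcomp phi (dd_b D g) = pcomp (dd_b E g) (fmap (pa g) phi) }.

Definition ddid (D : ddatum) : ddhom D D.
Proof.
exists (pid (dd_obj D)) => g.
by rewrite pcomp1f (fmap_id (pa g)) /= pcompf1.
Defined.

Definition ddcomp (D E F : ddatum) (psi : ddhom E F) (phi : ddhom D E) : ddhom D F.
Proof.
exists (pcomp (proj1_sig psi) (proj1_sig phi)) => g.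
case: psi phi => [psi hpsi] [phi hphi] /=.
rewrite -pcompA hphi pcompA hpsi -pcompA.
by rewrite (fmap_comp (pa g)).
Defined.

Definition DescentCat : Cat.
Proof.
refine {| cobj := ddatum; chom := ddhom; cid := ddid; ccomp := ddcomp |}.
- by move=> a b c d h g f; apply: sig_eqP => /=; rewrite pcompA.
- by move=> a b f; apply: sig_eqP => /=; rewrite pcomp1f.
- by move=> a b f; apply: sig_eqP => /=; rewrite pcompf1.
Defined.

Variables (A : PreAdd) (f : Functor (PCat A) (PCat A')) (E : equivariance pa f).

Definition hat_obj (a : A) : ddatum.
Proof.
refine {| dd_obj := f a; dd_b := fun g => eq_i E g a |}.
- by move=> g; exists (eq_iinv E g a); split; [exact: eq_i_inv1 | exact: eq_i_inv2].
- by move=> g h; rewrite eq_i_coc.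
Defined.

Definition hat_map (a b : A) (phi : phom A a b) : ddhom (hat_obj a) (hat_obj b).
Proof. by exists (fmap f phi) => g; apply: eq_i_nat. Defined.

Definition hat_f : Functor (PCat A) DescentCat.
Proof.
refine (@Build_Functor (PCat A) DescentCat hat_obj hat_map _ _).
- by move=> a; apply: sig_eqP => /=; rewrite (fmap_id f).
- by move=> a b c g h; apply: sig_eqP => /=; rewrite (fmap_comp f).
Defined.

Definition has_descent : Prop := equivalence hat_f.

Record adjunction (G : Functor (PCat A') (PCat A)) := {
  adj_eta : forall a : A, phom A a (G (f a));
  adj_eps : forall c : A', phom A' (f (G c)) c;
  adj_eta_nat : natural (F := Fid (PCat A)) (G := Fcomp G f) adj_eta;
  adj_eps_nat : natural (F := Fcomp f G) (G := Fid (PCat A')) adj_eps;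
  adj_tri1 : forall a : A, pcomp (adj_eps (f a)) (fmap f (adj_eta a)) = pid (f a);
  adj_tri2 : forall c : A', pcomp (fmap G (adj_eps c)) (adj_eta (G c)) = pid (G c) }.

Variables (G : Functor (PCat A') (PCat A)) (adj : adjunction G).

(* g-component of kappa_C : f^* f_* C -> (+)_g g^* C *)
Definition kappa_comp (g : Gam) (C : A') : phom A' (f (G C)) (pa g C) :=
  pcomp (fmap (pa g) (adj_eps adj C)) (eq_iinv E g (G C)).

Definition cartesian : Prop :=
  forall (C : A') (B : biproduct (fun g : Gam => pa g C)),
    is_iso (C := PCat A') (\sum_g pcomp (bp_inj B g) (kappa_comp g C)).

(* trace structure; condition (2) written with Sigma o u_{f^*A} unfolded:
   Sigma o (+)_g b_g o kappa = sum_g b_g o kappa_g *)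
Definition trace_structure (tr : forall a : A, phom A (G (f a)) a) : Prop :=
  natural (F := Fcomp G f) (G := Fid (PCat A)) tr /\
  (forall a : A, pcomp (tr a) (adj_eta adj a) = pid a *+ #|Gam|) /\
  (forall a : A, (fmap f (tr a) : phom A' _ _)
                 = \sum_g pcomp (eq_i E g a) (kappa_comp g (f a))).
End Descent.

(* Main.v *)
Require Import Defs.
From mathcomp Require Import all_boot all_order all_algebra all_fingroup.
From Stdlib Require Import ClassicalEpsilon.
Import Defs.
Set Implicit Arguments. Unset Strict Implicit. Unset Printing Implicit Defensive.
Import GRing.Theory.
Local Open Scope ring_scope.

Section PA.
Variable A : PreAdd.

Lemma pcomp0l (a b c : A) (f : phom A a b) : pcomp (0 : phom A b c) f = 0.
Proof.
move: (pcompDl (0 : phom A b c) 0 f); rewrite addr0 => h.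
by apply: (addrI (pcomp (0 : phom A b c) f)); rewrite addr0 -h.
Qed.

Lemma pcomp0r (a b c : A) (g : phom A b c) : pcomp g (0 : phom A a b) = 0.
Proof.
move: (pcompDr g (0 : phom A a b) 0); rewrite addr0 => h.
by apply: (addrI (pcomp g (0 : phom A a b))); rewrite addr0 -h.
Qed.

Lemma pcomp_suml (a b c : A) (I : Type) (r : seq I) (P : pred I) (F : I -> phom A b c) (f : phom A a b) :
  pcomp (\sum_(i <- r | P i) F i) f = \sum_(i <- r | P i) pcomp (F i) f.
Proof.
by apply: (big_morph (fun x => pcomp x f)) => [x y|]; rewrite ?pcompDl ?pcomp0l.
Qed.

Lemma pcomp_sumr (a b c : A) (I : Type) (r : seq I) (P : pred I) (F : I -> phom A a b) (g : phom A b c) :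
  pcomp g (\sum_(i <- r | P i) F i) = \sum_(i <- r | P i) pcomp g (F i).
Proof.
by apply: (big_morph (fun x => pcomp g x)) => [x y|]; rewrite ?pcompDr ?pcomp0r.
Qed.

Lemma pcompMnl (a b c : A) (g : phom A b c) (f : phom A a b) n :
  pcomp (g *+ n) f = pcomp g f *+ n.
Proof. by elim: n => [|n IH]; rewrite ?pcomp0l // !mulrS pcompDl IH. Qed.

Lemma pcompMnr (a b c : A) (g : phom A b c) (f : phom A a b) n :
  pcomp g (f *+ n) = pcomp g f *+ n.
Proof. by elim: n => [|n IH]; rewrite ?pcomp0r // !mulrS pcompDr IH. Qed.

Lemma iso_cancelr (a b c : A) (u : phom A a b) (x y : phom A b c) :
  is_iso (C := PCat A) u -> pcomp x u = pcomp y u -> x = y.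
Proof.
case=> v [_ h2] e.
by rewrite -(pcompf1 x) -(pcompf1 y) -[pid b]h2 /= !pcompA e.
Qed.

Lemma iso_cancell (a b c : A) (u : phom A b c) (x y : phom A a b) :
  is_iso (C := PCat A) u -> pcomp u x = pcomp u y -> x = y.
Proof.
case=> v [h1 _] e.
by rewrite -(pcomp1f x) -(pcomp1f y) -[pid b]h1 /= -!pcompA e.
Qed.

Lemma pA3 (X Y Z U V : A) (x : phom A U V) (y : phom A Z U) (z : phom A Y Z) (w : phom A X Y) :
  pcomp x (pcomp y (pcomp z w)) = pcomp (pcomp x (pcomp y z)) w.
Proof. by rewrite !pcompA. Qed.

End PA.

Section AddF.
Variables (A B : PreAdd) (F : Functor (PCat A) (PCat B)) (hF : additive_functor F).

Lemma fmap0 (a b : A) : (fmap F (0 : phom A a b) : phom B _ _) = 0.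
Proof.
move: (hF (0 : phom A a b) 0); rewrite addr0 => h.
by apply: (addrI (fmap F (0 : phom A a b) : phom B _ _)); rewrite addr0 -h.
Qed.

Lemma fmap_sum (a b : A) (I : Type) (r : seq I) (P : pred I) (G : I -> phom A a b) :
  (fmap F (\sum_(i <- r | P i) G i) : phom B _ _) = \sum_(i <- r | P i) (fmap F (G i) : phom B _ _).
Proof.
by apply: (big_morph (fun x : phom A a b => fmap F x : phom B _ _)) => [x y|]; rewrite ?hF ?fmap0.
Qed.

Lemma fmapMn (a b : A) (x : phom A a b) n :
  (fmap F (x *+ n) : phom B _ _) = (fmap F x : phom B _ _) *+ n.
Proof. by elim: n => [|n IH]; rewrite ?fmap0 // !mulrS hF IH. Qed.

End AddF.

Section FP.
Variables (A B : PreAdd) (F : Functor (PCat A) (PCat B)).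
Lemma fmapC (a b c : A) (g : phom A b c) (h : phom A a b) :
  (fmap F (pcomp g h) : phom B _ _) = pcomp (fmap F g : phom B _ _) (fmap F h : phom B _ _).
Proof. exact: (fmap_comp F g h). Qed.
Lemma fmap1 (a : A) : (fmap F (pid a) : phom B _ _) = pid (F a).
Proof. exact: (fmap_id F a). Qed.
End FP.

Section Bip.
Variables (A : PreAdd) (I : finType) (X : I -> A) (B : biproduct X).

Lemma bp_proj_sum (Y : A) (x : forall i, phom A Y (X i)) g :
  pcomp (bp_proj B g) (\sum_h pcomp (bp_inj B h) (x h)) = x g.
Proof.
rewrite pcomp_sumr (bigD1 g) //= pcompA bp_projinj pcomp1f big1 ?addr0 // => h hg.
by rewrite pcompA bp_proj_inj0 ?pcomp0l // eq_sym.
Qed.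

Lemma bp_sum_inj (Y : A) (y : forall i, phom A (X i) Y) g :
  pcomp (\sum_h pcomp (y h) (bp_proj B h)) (bp_inj B g) = y g.
Proof.
rewrite pcomp_suml (bigD1 g) //= -pcompA bp_projinj pcompf1 big1 ?addr0 // => h hg.
by rewrite -pcompA bp_proj_inj0 ?pcomp0r.
Qed.

Lemma bp_decomp (Y : A) (u : phom A Y (bp_obj B)) :
  u = \sum_h pcomp (bp_inj B h) (pcomp (bp_proj B h) u).
Proof.
rewrite -{1}(pcomp1f u) -(bp_sum B) pcomp_suml.
by apply: eq_bigr => h _; rewrite pcompA.
Qed.

Lemma bp_decomp_l (Y : A) (u : phom A (bp_obj B) Y) :
  u = \sum_h pcomp (pcomp u (bp_inj B h)) (bp_proj B h).
Proof.
rewrite -{1}(pcompf1 u) -(bp_sum B) pcomp_sumr.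
by apply: eq_bigr => h _; rewrite pcompA.
Qed.

Lemma bp_ext (Y : A) (u v : phom A Y (bp_obj B)) :
  (forall g, pcomp (bp_proj B g) u = pcomp (bp_proj B g) v) -> u = v.
Proof.
move=> h; rewrite (bp_decomp u) (bp_decomp v).
by apply: eq_bigr => g _; rewrite h.
Qed.

Lemma bp_ext_l (Y : A) (u v : phom A (bp_obj B) Y) :
  (forall g, pcomp u (bp_inj B g) = pcomp v (bp_inj B g)) -> u = v.
Proof.
move=> h; rewrite (bp_decomp_l u) (bp_decomp_l v).
by apply: eq_bigr => g _; rewrite h.
Qed.

End Bip.

Section Casts.
Variables (Gam : finGroupType) (A' : PreAdd) (pa : pseudo_action Gam A').

Lemma cast_inj (C : A') (B : biproduct (fun g => pa g C)) (g g' : Gam) (e : g = g') :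
  pcomp (bp_inj B g') (act_cast pa e C) = bp_inj B g.
Proof. by case: g' / e; rewrite /= pcompf1. Qed.

Lemma cast_proj (C : A') (B : biproduct (fun g => pa g C)) (g g' : Gam) (e : g = g') :
  pcomp (act_cast pa e C) (bp_proj B g) = bp_proj B g'.
Proof. by case: g' / e; rewrite /= pcomp1f. Qed.

Lemma cast_dd (D : ddatum pa) (g g' : Gam) (e : g = g') :
  dd_b D g = pcomp (dd_b D g') (act_cast pa e (dd_obj D)).
Proof. by case: g' / e; rewrite /= pcompf1. Qed.

Lemma cast_K (C : A') (g g' : Gam) (e : g = g') :
  pcomp (act_cast pa (esym e) C) (act_cast pa e C) = pid _.
Proof. by case: g' / e; rewrite /= pcompf1. Qed.

Lemma cast_K' (C : A') (g g' : Gam) (e : g = g') :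
  pcomp (act_cast pa e C) (act_cast pa (esym e) C) = pid _.
Proof. by case: g' / e; rewrite /= pcompf1. Qed.

Lemma c1h (h : Gam) (C : A') :
  pa_c pa 1%g h C = pcomp (act_cast pa (esym (mul1g h)) C) (fmap (pa h) (pa_e pa C)).
Proof. by rewrite -pa_unit_l pcompA cast_K pcomp1f. Qed.

Lemma b1e (D : ddatum pa) : dd_b D 1%g = pa_e pa (dd_obj D).
Proof.
set C := dd_obj D.
have h1 := dd_coc D 1%g 1%g.
rewrite (cast_dd D (mul1g 1%g)) -pcompA pa_unit_l in h1.
have h2 : (fmap (pa 1%g) (dd_b D 1%g) : phom A' _ _) = fmap (pa 1%g) (pa_e pa C).
  exact: (iso_cancell (dd_iso D 1%g) h1).
apply: (iso_cancelr (pa_e_iso pa (pa 1%g C))).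
by rewrite pa_e_nat h2 -pa_e_nat.
Qed.

End Casts.

Section Equi.
Variables (Gam : finGroupType) (A A' : PreAdd) (pa : pseudo_action Gam A')
  (f : Functor (PCat A) (PCat A')) (E : equivariance pa f).

Lemma i_iso g a : is_iso (C := PCat A') (eq_i E g a).
Proof. by exists (eq_iinv E g a); split; [exact: eq_i_inv1 | exact: eq_i_inv2]. Qed.

Lemma iinv_nat g (a b : A) (phi : phom A a b) :
  pcomp (eq_iinv E g b) (fmap f phi : phom A' _ _)
  = pcomp (fmap (pa g) (fmap f phi) : phom A' _ _) (eq_iinv E g a).
Proof.
apply: (iso_cancell (i_iso g b)).
rewrite pcompA eq_i_inv2 pcomp1f pcompA -eq_i_nat -pcompA eq_i_inv2.
by rewrite pcompf1.
Qed.

Lemma c_iinv g h a :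
  pcomp (pa_c pa g h (f a)) (pcomp (fmap (pa h) (eq_iinv E g a)) (eq_iinv E h a))
  = eq_iinv E (g * h)%g a.
Proof.
apply: (iso_cancell (i_iso (g * h)%g a)).
rewrite eq_i_inv2 pcompA eq_i_coc -pcompA (pcompA (fmap (pa h) (eq_i E g a))).
by rewrite -fmapC eq_i_inv2 fmap1 pcomp1f eq_i_inv2.
Qed.

Lemma c_iinv' g h a :
  pcomp (pa_c pa g h (f a)) (fmap (pa h) (eq_iinv E g a) : phom A' _ _)
  = pcomp (eq_iinv E (g * h)%g a) (eq_i E h a).
Proof. by rewrite -c_iinv -!pcompA eq_i_inv1 pcompf1. Qed.

Lemma i1e a : eq_i E 1%g a = pa_e pa (f a).
Proof. exact: (b1e (hat_obj E a)). Qed.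

Lemma iinv1e a : pcomp (pa_e pa (f a)) (eq_iinv E 1%g a) = pid _.
Proof. by rewrite -i1e eq_i_inv2. Qed.

Section Adj.
Variables (G : Functor (PCat A') (PCat A)) (adj : adjunction f G).

Lemma eta_nat (a b : A) (phi : phom A a b) :
  pcomp (fmap G (fmap f phi) : phom A _ _) (adj_eta adj a) = pcomp (adj_eta adj b) phi.
Proof. exact: (adj_eta_nat adj phi). Qed.

Lemma eps_nat (c d : A') (phi : phom A' c d) :
  pcomp phi (adj_eps adj c) = pcomp (adj_eps adj d) (fmap f (fmap G phi) : phom A' _ _).
Proof. exact: (adj_eps_nat adj phi). Qed.

Definition transp (a : A) (C : A') (x : phom A' (f a) C) : phom A a (G C) :=
  pcomp (fmap G x : phom A _ _) (adj_eta adj a).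

Lemma transpK (a : A) (C : A') (x : phom A' (f a) C) :
  pcomp (adj_eps adj C) (fmap f (transp x) : phom A' _ _) = x.
Proof.
rewrite /transp fmapC /= pcompA -eps_nat -pcompA.
by rewrite (adj_tri1 adj) pcompf1.
Qed.

Lemma transp_inj (a : A) (C : A') (u v : phom A a (G C)) :
  pcomp (adj_eps adj C) (fmap f u : phom A' _ _) = pcomp (adj_eps adj C) (fmap f v : phom A' _ _)
  -> u = v.
Proof.
have H : forall w : phom A a (G C), w = transp (pcomp (adj_eps adj C) (fmap f w : phom A' _ _)).
  move=> w; rewrite /transp fmapC /= -pcompA eta_nat pcompA.
  by rewrite (adj_tri2 adj) pcomp1f.
by move=> e; rewrite (H u) (H v) e.
Qed.

Lemma kappa_nat g (C D : A') (x : phom A' C D) :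
  pcomp (kappa_comp E adj g D) (fmap f (fmap G x) : phom A' _ _)
  = pcomp (fmap (pa g) x : phom A' _ _) (kappa_comp E adj g C).
Proof.
rewrite /kappa_comp -pcompA iinv_nat !pcompA; congr pcomp.
by rewrite -!fmapC /= eps_nat.
Qed.

Lemma kappa_i g (C : A') :
  pcomp (kappa_comp E adj g C) (eq_i E g (G C)) = fmap (pa g) (adj_eps adj C).
Proof. by rewrite /kappa_comp -pcompA eq_i_inv1 pcompf1. Qed.

Lemma kappa_eta g (a : A) :
  pcomp (kappa_comp E adj g (f a)) (fmap f (adj_eta adj a) : phom A' _ _) = eq_iinv E g a.
Proof.
rewrite /kappa_comp -pcompA iinv_nat pcompA -fmapC /= (adj_tri1 adj).
by rewrite fmap1 pcomp1f.
Qed.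

Lemma kappa1 (C : A') :
  pcomp (pa_e pa C) (kappa_comp E adj 1%g C) = adj_eps adj C.
Proof.
rewrite /kappa_comp pcompA -pa_e_nat -pcompA.
by rewrite -i1e eq_i_inv2 pcompf1.
Qed.

Definition sik (a : A) : phom A' (f (G (f a))) (f a) :=
  \sum_h pcomp (eq_i E h a) (kappa_comp E adj h (f a)).

Lemma sik_dd (a : A) g :
  pcomp (sik a) (eq_i E g (G (f a))) = pcomp (eq_i E g a) (fmap (pa g) (sik a) : phom A' _ _).
Proof.
rewrite /sik pcomp_suml (fmap_sum (pa_add pa g)) pcomp_sumr.
rewrite (reindex_inj (mulIg g)) /=.
apply: eq_bigr => h _.
rewrite fmapC /= pcompA -eq_i_coc /kappa_comp.
rewrite -!pcompA; congr pcomp.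
rewrite fmapC (pcompA (pa_c _ _ _ _)) -pa_c_nat -!pcompA; congr pcomp.
by rewrite -(c_iinv h g) -!pcompA eq_i_inv1 pcompf1.
Qed.

Lemma kappa_c g h (C : A') :
  pcomp (pa_c pa g h C) (pcomp (fmap (pa h) (kappa_comp E adj g C) : phom A' _ _) (eq_iinv E h (G C)))
  = kappa_comp E adj (g * h)%g C.
Proof.
rewrite /kappa_comp fmapC -pcompA (pcompA (pa_c _ _ _ _)) -pa_c_nat -pcompA.
by rewrite c_iinv.
Qed.

Lemma sik_nat (a b : A) (phi : phom A a b) :
  pcomp (fmap f phi : phom A' _ _) (sik a)
  = pcomp (sik b) (fmap f (fmap G (fmap f phi)) : phom A' _ _).
Proof.
rewrite /sik pcomp_sumr pcomp_suml; apply: eq_bigr => h _.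
by rewrite pcompA eq_i_nat -pcompA -kappa_nat pcompA.
Qed.

Lemma sik_eta (a : A) :
  pcomp (sik a) (fmap f (adj_eta adj a) : phom A' _ _) = pid (f a) *+ #|Gam|.
Proof.
rewrite /sik pcomp_suml -sumr_const; apply: eq_bigr => h _.
by rewrite -pcompA kappa_eta eq_i_inv2.
Qed.

End Adj.
End Equi.

Definition choose_inh (T : Type) (h : inhabited T) : T :=
  proj1_sig (constructive_indefinite_description (fun _ : T => True)
    (match h with inhabits x => ex_intro _ x I end)).

Section Inv.
Variables (A : PreAdd) (a b : A) (u : phom A a b) (hu : is_iso (C := PCat A) u).
Definition invof : phom A b a := proj1_sig (constructive_indefinite_description _ hu).
Lemma invofK : pcomp invof u = pid a.
Proof. exact: (proj1 (proj2_sig (constructive_indefinite_description _ hu))). Qed.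
Lemma invofK' : pcomp u invof = pid b.
Proof. exact: (proj2 (proj2_sig (constructive_indefinite_description _ hu))). Qed.
End Inv.

Lemma dd_inv (Gam : finGroupType) (A' : PreAdd) (pa : pseudo_action Gam A')
  (D1 D2 : ddatum pa) (phi : ddhom D1 D2) (psi : phom A' (dd_obj D2) (dd_obj D1)) :
  pcomp psi (proj1_sig phi) = pid _ -> pcomp (proj1_sig phi) psi = pid _ ->
  is_iso (C := DescentCat pa) phi.
Proof.
move=> h1 h2.
have hpsi : forall g, pcomp psi (dd_b D2 g) = pcomp (dd_b D1 g) (fmap (pa g) psi).
  move=> g; rewrite -[LHS]pcompf1 -(fmap1 (pa g)) -h2 fmapC !pcompA.
  congr pcomp; rewrite -!pcompA -(proj2_sig phi g) pcompA h1 pcomp1f //.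
exists (exist _ psi hpsi); split; apply: sig_eqP => /=; [exact: h1 | exact: h2].
Qed.

Lemma sumr_constG (Gam : finType) (V : zmodType) (x : V) : \sum_(g : Gam) x = x *+ #|Gam|.
Proof. by rewrite sumr_const. Qed.

Section PartB.
Variables (Gam : finGroupType) (A A' : PreAdd) (hA' : additive_cat A')
  (pa : pseudo_action Gam A')
  (f : Functor (PCat A) (PCat A')) (hf : additive_functor f)
  (E : equivariance pa f)
  (hpa : pseudo_abelian A) (hZ : Zinv_linear #|Gam| A)
  (G : Functor (PCat A') (PCat A)) (adj : adjunction f G)
  (hcart : cartesian E adj) (tr : forall a : A, phom A (G (f a)) a)
  (htr : trace_structure E adj tr).

Local Notation n := #|Gam|.
Local Notation eps := (adj_eps adj).
Local Notation eta := (adj_eta adj).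
Local Notation kap := (kappa_comp E adj).

Lemma nu_ex (a : A) : exists nu : phom A a a, nu *+ n = pid a.
Proof. by case: (hZ a a) => g _ c2; exists (g (pid a)); exact: c2. Qed.

Definition nu (a : A) : phom A a a := proj1_sig (constructive_indefinite_description _ (nu_ex a)).
Lemma nuP (a : A) : nu a *+ n = pid a.
Proof. exact: (proj2_sig (constructive_indefinite_description _ (nu_ex a))). Qed.

Lemma mulninj (a b : A) (x y : phom A a b) : x *+ n = y *+ n -> x = y.
Proof. exact: (bij_inj (hZ a b)). Qed.

Lemma nu_comm (a b : A) (x : phom A a b) : pcomp (nu b) x = pcomp x (nu a).
Proof.
by apply: mulninj; rewrite -pcompMnl -pcompMnr !nuP pcomp1f pcompf1.
Qed.

Lemma fnuP (a : A) : (fmap f (nu a) : phom A' _ _) *+ n = pid _.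
Proof. by rewrite -(fmapMn hf) nuP fmap1. Qed.

Section Obj.
Variable D : ddatum pa.
Local Notation C := (dd_obj D).
Local Notation b := (dd_b D).

Definition bpc : biproduct (fun g => pa g C) := choose_inh (hA' (fun g => pa g C)).
Definition Km : phom A' (f (G C)) (bp_obj bpc) := \sum_g pcomp (bp_inj bpc g) (kap g C).
Definition Kinv := invof (hcart bpc).
Definition bi g := invof (dd_iso D g).
Definition bet : phom A' (f (G C)) C := \sum_g pcomp (b g) (kap g C).
Definition sig : phom A' C (f (G C)) := pcomp Kinv (\sum_h pcomp (bp_inj bpc h) (bi h)).
Definition qm : phom A (G C) (G C) := transp adj bet.
Definition pm : phom A (G C) (G C) := pcomp qm (nu (G C)).

Lemma projK g : pcomp (bp_proj bpc g) Km = kap g C.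
Proof. exact: bp_proj_sum. Qed.

Lemma LA : pcomp (eps C) (fmap f qm : phom A' _ _) = bet.
Proof. exact: transpK. Qed.

Lemma LB h : pcomp (b h) (pcomp (kap h C) (fmap f qm : phom A' _ _)) = bet.
Proof.
rewrite /kappa_comp -(pcompA (fmap (pa h) _)) iinv_nat (pcompA (fmap (pa h) (eps C))) -fmapC LA.
rewrite /bet (fmap_sum (pa_add pa h)) pcomp_suml pcomp_sumr.
rewrite [RHS](reindex_inj (mulIg h)) /=.
apply: eq_bigr => g _.
rewrite fmapC -!pcompA (pcompA (b h)) dd_coc -pcompA; congr pcomp.
exact: kappa_c.
Qed.

Lemma LB' h : pcomp (kap h C) (fmap f qm : phom A' _ _) = pcomp (bi h) bet.
Proof. by rewrite -(LB h) pcompA invofK pcomp1f. Qed.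

Lemma LC : (fmap f qm : phom A' _ _) = pcomp sig bet.
Proof.
apply: (iso_cancell (hcart bpc)).
rewrite /sig !pcompA invofK' pcomp1f pcomp_suml pcomp_suml.
by apply: eq_bigr => h _; rewrite -pcompA LB' pcompA.
Qed.

Lemma bet_sig : pcomp bet sig = pid C *+ n.
Proof.
have -> : bet = \sum_g pcomp (b g) (pcomp (bp_proj bpc g) Km).
  by apply: eq_bigr => g _; rewrite projK.
rewrite pcomp_suml -sumr_constG; apply: eq_bigr => g _.
rewrite /sig -!pcompA (pcompA Km) invofK' pcomp1f bp_proj_sum.
exact: invofK'.
Qed.

Lemma eps_sig : pcomp (eps C) sig = pid C.
Proof.
rewrite -(kappa1 E) -b1e -pcompA -projK /sig -(pcompA (bp_proj _ _)) (pcompA Km) invofK' pcomp1f.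
by rewrite bp_proj_sum; exact: invofK'.
Qed.

Lemma fp1 : (fmap f pm : phom A' _ _) = pcomp sig (pcomp bet (fmap f (nu (G C)))).
Proof. by rewrite /pm fmapC LC pcompA. Qed.

Lemma fp2 : (fmap f pm : phom A' _ _) = pcomp (fmap f (nu (G C))) (pcomp sig bet).
Proof. by rewrite /pm -nu_comm fmapC LC. Qed.

Lemma ep : pcomp (eps C) (fmap f pm : phom A' _ _) = pcomp bet (fmap f (nu (G C))).
Proof. by rewrite /pm fmapC pcompA LA. Qed.

Lemma ep_sig : pcomp (eps C) (pcomp (fmap f pm : phom A' _ _) sig) = pid C.
Proof.
rewrite fp2 -pA3 bet_sig pcompMnr pcompf1 (pcompMnr (fmap f (nu (G C)) : phom A' _ _)).
rewrite -pcompMnl fnuP pcomp1f.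
exact: eps_sig.
Qed.

Lemma p_idem : pcomp pm pm = pm.
Proof.
apply: (transp_inj (adj:=adj)); rewrite fmapC.
rewrite [X in pcomp _ (pcomp _ X)]fp1 pA3 ep_sig pcomp1f.
by rewrite ep.
Qed.

Lemma bkfp g : pcomp (b g) (pcomp (kap g C) (fmap f pm : phom A' _ _)) = pcomp (eps C) (fmap f pm : phom A' _ _).
Proof. by rewrite ep /pm fmapC pA3 LB. Qed.

End Obj.

Lemma split_ex (D : ddatum pa) :
  exists t : {c : A & (phom A (G (dd_obj D)) c * phom A c (G (dd_obj D)))%type},
    pcomp (projT2 t).1 (projT2 t).2 = pid _ /\ pcomp (projT2 t).2 (projT2 t).1 = pm D.
Proof.
case: (hpa (p_idem D)) => c [r [s [h1 h2]]].
by exists (existT _ c (r, s)); split.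
Qed.

Definition spl D := proj1_sig (constructive_indefinite_description _ (split_ex D)).
Definition Qob D : A := projT1 (spl D).
Definition Qr D : phom A (G (dd_obj D)) (Qob D) := (projT2 (spl D)).1.
Definition Qs D : phom A (Qob D) (G (dd_obj D)) := (projT2 (spl D)).2.

Lemma rs D : pcomp (Qr D) (Qs D) = pid _.
Proof. exact: (proj1 (proj2_sig (constructive_indefinite_description _ (split_ex D)))). Qed.
Lemma sr D : pcomp (Qs D) (Qr D) = pm D.
Proof. exact: (proj2 (proj2_sig (constructive_indefinite_description _ (split_ex D)))). Qed.
Lemma ps D : pcomp (pm D) (Qs D) = Qs D.
Proof. by rewrite -sr -pcompA rs pcompf1. Qed.
Lemma rp D : pcomp (Qr D) (pm D) = Qr D.
Proof. by rewrite -sr pcompA rs pcomp1f. Qed.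

Lemma bet_nat (D D' : ddatum pa) (chi : ddhom D D') :
  pcomp (proj1_sig chi) (bet D) = pcomp (bet D') (fmap f (fmap G (proj1_sig chi)) : phom A' _ _).
Proof.
rewrite /bet pcomp_sumr pcomp_suml; apply: eq_bigr => g _.
by rewrite pcompA (proj2_sig chi g) -pcompA -kappa_nat pcompA.
Qed.

Lemma p_nat (D D' : ddatum pa) (chi : ddhom D D') :
  pcomp (pm D') (fmap G (proj1_sig chi)) = pcomp (fmap G (proj1_sig chi) : phom A _ _) (pm D).
Proof.
apply: (transp_inj (adj:=adj)).
rewrite (@fmapC _ _ f _ _ _ (pm D') _) (@fmapC _ _ f _ _ _ _ (pm D)).
transitivity (pcomp (pcomp (bet D') (fmap f (fmap G (proj1_sig chi)) : phom A' _ _)) (fmap f (nu _) : phom A' _ _)).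
  rewrite pcompA ep -!pcompA; congr pcomp.
  by rewrite -!fmapC nu_comm.
by rewrite [RHS]pcompA -eps_nat -[RHS]pcompA ep [RHS]pcompA bet_nat.
Qed.

Definition Qmap (D D' : ddatum pa) (chi : ddhom D D') : phom A (Qob D) (Qob D') :=
  pcomp (Qr D') (pcomp (fmap G (proj1_sig chi)) (Qs D)).

Definition Qf : Functor (DescentCat pa) (PCat A).
Proof.
refine (@Build_Functor (DescentCat pa) (PCat A) Qob Qmap _ _).
- by move=> D; rewrite /Qmap /= fmap1 pcomp1f rs.
- move=> D1 D2 D3 psi phi; rewrite /Qmap /= fmapC.
  rewrite -!pcompA; congr pcomp.
  rewrite (pcompA (Qs D2)) sr (pcompA (pm D2)) p_nat -(pcompA (fmap G _)) ps.
  by rewrite pcompA.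
Defined.

Lemma qm_hat a : qm (hat_obj E a) = pcomp (eta a) (tr a).
Proof.
rewrite /qm /transp.
have -> : bet (hat_obj E a) = fmap f (tr a) by rewrite (proj2 (proj2 htr)).
exact: eta_nat.
Qed.

Lemma pm_hat a : pm (hat_obj E a) = pcomp (eta a) (pcomp (nu a) (tr a)).
Proof. by rewrite /pm qm_hat -pcompA nu_comm. Qed.

Lemma nuT a : pcomp (pcomp (nu a) (tr a)) (eta a) = pid a.
Proof. by rewrite -pcompA (proj1 (proj2 htr)) pcompMnr pcompf1 nuP. Qed.

Definition alpha a : phom A (Qob (hat_obj E a)) a := pcomp (pcomp (nu a) (tr a)) (Qs (hat_obj E a)).
Definition alinv a : phom A a (Qob (hat_obj E a)) := pcomp (Qr (hat_obj E a)) (eta a).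

Lemma alpha_iso a : is_iso (C := PCat A) (alpha a).
Proof.
exists (alinv a); split => /=.
- rewrite /alpha /alinv.
  have -> : pcomp (pcomp (Qr (hat_obj E a)) (eta a)) (pcomp (pcomp (nu a) (tr a)) (Qs (hat_obj E a)))
           = pcomp (Qr (hat_obj E a)) (pcomp (pm (hat_obj E a)) (Qs (hat_obj E a))) by rewrite pm_hat !pcompA.
  by rewrite ps rs.
- rewrite /alpha /alinv -pcompA (pcompA (Qs _)) sr pm_hat !pcompA nuT pcomp1f.
  exact: nuT.
Qed.

Lemma alpha_nat : natural (F := Fcomp Qf (hat_f E)) (G := Fid (PCat A)) alpha.
Proof.
move=> a b phi /=; rewrite /alpha /Qmap /=.
rewrite -!pcompA (pcompA (Qs _) (Qr _)) sr.
rewrite (pcompA (pm (hat_obj E b))).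
have := p_nat (hat_map E phi) => /= ->.
rewrite -(pcompA (fmap G _)) ps (pcompA (tr b)).
have := proj1 htr a b phi => /= <-.
by rewrite !pcompA nu_comm.
Qed.

Definition betu D : phom A' (f (Qob D)) (dd_obj D) := pcomp (eps _) (fmap f (Qs D)).

Lemma fs_p D : (fmap f (Qs D) : phom A' _ _) = pcomp (fmap f (pm D)) (fmap f (Qs D)).
Proof. by rewrite -fmapC ps. Qed.

Lemma betu_dd D g :
  pcomp (betu D) (eq_i E g (Qob D)) = pcomp (dd_b D g) (fmap (pa g) (betu D) : phom A' _ _).
Proof.
rewrite /betu fmapC -(kappa_i E adj) -!pcompA -eq_i_nat.
rewrite fs_p !pcompA; congr pcomp; congr pcomp.
by rewrite -(bkfp D g) !pcompA.
Qed.

Definition betd D : ddhom (hat_obj E (Qob D)) D := exist _ (betu D) (betu_dd D).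

Lemma betd_iso D : is_iso (C := DescentCat pa) (betd D).
Proof.
apply: (dd_inv (phi := betd D) (psi := pcomp (fmap f (Qr D)) (sig D))) => /=.
- rewrite /betu fs_p (pcompA (eps _)) ep -pcompA (pcompA (sig D)) -fp1.
  by rewrite -fmapC -fmapC ps rs fmap1.
- by rewrite /betu -pcompA (pcompA (fmap f (Qs D) : phom A' _ _)) -fmapC sr ep_sig.
Qed.

Lemma betd_nat : natural (F := Fcomp (hat_f E) Qf) (G := Fid (DescentCat pa)) betd.
Proof.
move=> D D' chi; apply: sig_eqP => /=.
rewrite /betu /Qmap -[RHS]pcompA -fmapC (pcompA (Qs D')) sr (pcompA (pm D')) p_nat.
rewrite -(pcompA (fmap G _)) ps fmapC [RHS]pcompA -eps_nat.
by rewrite pcompA.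
Qed.

Lemma partB : has_descent E.
Proof.
exists Qf; split.
- by exists alpha; split; [exact: alpha_nat | exact: alpha_iso].
- by exists betd; split; [exact: betd_nat | exact: betd_iso].
Qed.

End PartB.

Section UA.
Variables (A A' : PreAdd) (f : Functor (PCat A) (PCat A')) (G0 : A' -> A)
  (eps0 : forall C : A', phom A' (f (G0 C)) C)
  (tp : forall (a : A) (C : A'), phom A' (f a) C -> phom A a (G0 C))
  (tp_spec : forall a C (x : phom A' (f a) C), pcomp (eps0 C) (fmap f (tp x) : phom A' _ _) = x)
  (tp_uniq : forall a C (x : phom A' (f a) C) (y : phom A a (G0 C)),
      pcomp (eps0 C) (fmap f y : phom A' _ _) = x -> y = tp x).

Lemma tp_eq a C (y y' : phom A a (G0 C)) :
  pcomp (eps0 C) (fmap f y : phom A' _ _) = pcomp (eps0 C) (fmap f y' : phom A' _ _) -> y = y'.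
Proof. by move=> e; rewrite (tp_uniq e) -(tp_uniq (erefl _)). Qed.

Definition UAmap (C D : A') (phi : phom A' C D) : phom A (G0 C) (G0 D) := tp (pcomp phi (eps0 C)).

Lemma UAmapP (C D : A') (phi : phom A' C D) :
  pcomp (eps0 D) (fmap f (UAmap phi) : phom A' _ _) = pcomp phi (eps0 C).
Proof. exact: tp_spec. Qed.

Definition UAF : Functor (PCat A') (PCat A).
Proof.
refine (@Build_Functor (PCat A') (PCat A) G0 UAmap _ _).
- move=> C /=; apply: tp_eq; rewrite UAmapP.
  by rewrite (fmap1 f) pcompf1 pcomp1f.
- move=> C D E' g h /=; apply: tp_eq; rewrite UAmapP fmapC [RHS]pcompA.
  by rewrite (UAmapP g) -[RHS]pcompA UAmapP pcompA.
Defined.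

Definition UAeta (a : A) : phom A a (G0 (f a)) := tp (pid (f a)).

Definition UAadj : adjunction f UAF.
Proof.
refine (@Build_adjunction _ _ f UAF UAeta eps0 _ _ _ _).
- move=> a b phi /=; apply: tp_eq.
  rewrite !fmapC !pcompA UAmapP tp_spec -pcompA tp_spec.
  by rewrite pcompf1 pcomp1f.
- by move=> C D phi /=; rewrite UAmapP.
- by move=> a; rewrite tp_spec.
- move=> C /=; apply: tp_eq.
  by rewrite fmapC pcompA UAmapP -pcompA tp_spec pcompf1 fmap1 pcompf1.
Defined.

End UA.

Section IsoC.
Variable (C : Cat).

Lemma isoC_cancelr (a b c : C) (u : chom C a b) (x y : chom C b c) :
  is_iso u -> ccomp x u = ccomp y u -> x = y.
Proof.
case=> v [_ h2] e.
by rewrite -(ccompf1 x) -(ccompf1 y) -h2 !ccompA e.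
Qed.

Lemma isoC_cancell (a b c : C) (u : chom C b c) (x y : chom C a b) :
  is_iso u -> ccomp u x = ccomp u y -> x = y.
Proof.
case=> v [h1 _] e.
by rewrite -(ccomp1f x) -(ccomp1f y) -h1 -!ccompA e.
Qed.

End IsoC.

Section EqFF.
Variables (C D : Cat) (F : Functor C D).

Lemma equiv_ff : equivalence F ->
  (forall a b (z : chom D (F a) (F b)), exists y, fmap F y = z) /\
  (forall a b (y y' : chom C a b), fmap F y = fmap F y' -> y = y').
Proof.
case=> Q [[al [aln ali]] [be [ben bei]]].
have faithF : forall a b (y y' : chom C a b), fmap F y = fmap F y' -> y = y'.
  move=> a b y y' e; apply: (isoC_cancelr (ali a)).
  by rewrite (aln _ _ y) (aln _ _ y') /= e.
have faithQ : forall a b (y y' : chom D a b), fmap Q y = fmap Q y' -> y = y'.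
  move=> a b y y' e.
  have ee : ccomp y (be a) = ccomp y' (be a) by rewrite (ben _ _ y) (ben _ _ y') /= e.
  exact: (isoC_cancelr (bei a) ee).
split=> // a b z.
case: (ali a) => v [v1 v2].
exists (ccomp (al b) (ccomp (fmap Q z) v)).
apply: faithQ.
have := aln _ _ (ccomp (al b) (ccomp (fmap Q z) v)) => /= e.
apply: (isoC_cancell (ali b)).
by rewrite -e -!ccompA v1 ccompf1.
Qed.

End EqFF.

Section InvC.
Variables (C : Cat) (a b : C) (u : chom C a b) (hu : is_iso u).
Definition invofC : chom C b a := proj1_sig (constructive_indefinite_description _ hu).
Lemma invofCK : ccomp invofC u = cid a.
Proof. exact: (proj1 (proj2_sig (constructive_indefinite_description _ hu))). Qed.
Lemma invofCK' : ccomp u invofC = cid b.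
Proof. exact: (proj2 (proj2_sig (constructive_indefinite_description _ hu))). Qed.
End InvC.

Section PartA.
Variables (Gam : finGroupType) (A A' : PreAdd) (pa : pseudo_action Gam A')
  (f : Functor (PCat A) (PCat A')) (hf : additive_functor f)
  (E : equivariance pa f)
  (bp : forall C : A', biproduct (fun g => pa g C))
  (Q : Functor (DescentCat pa) (PCat A))
  (bet : forall D, ddhom (hat_obj E (Q D)) D)
  (betinv : forall D, ddhom D (hat_obj E (Q D)))
  (bet_inv1 : forall D, pcomp (proj1_sig (betinv D)) (proj1_sig (bet D)) = pid _)
  (bet_inv2 : forall D, pcomp (proj1_sig (bet D)) (proj1_sig (betinv D)) = pid _)
  (pre : forall a b, ddhom (hat_obj E a) (hat_obj E b) -> phom A a b)
  (pre_spec : forall a b (z : ddhom (hat_obj E a) (hat_obj E b)),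
      (fmap f (pre z) : phom A' _ _) = proj1_sig z)
  (faithful : forall a b (y y' : phom A a b),
      (fmap f y : phom A' _ _) = fmap f y' -> y = y').

Section DC.
Variable C : A'.
Local Notation B := (bp C).

Definition cinv h g := invof (pa_c_iso pa h g C).

Definition bD g : phom A' (pa g (bp_obj B)) (bp_obj B) :=
  \sum_h pcomp (bp_inj B (h * g)%g) (pcomp (pa_c pa h g C) (fmap (pa g) (bp_proj B h))).
Definition bDinv g : phom A' (bp_obj B) (pa g (bp_obj B)) :=
  \sum_h pcomp (fmap (pa g) (bp_inj B h) : phom A' _ _) (pcomp (cinv h g) (bp_proj B (h * g)%g)).

Lemma projbD k g :
  pcomp (bp_proj B (k * g)%g) (bD g) = pcomp (pa_c pa k g C) (fmap (pa g) (bp_proj B k)).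
Proof.
rewrite /bD pcomp_sumr (bigD1 k) //= pcompA bp_projinj pcomp1f big1 ?addr0 // => h hk.
rewrite pcompA bp_proj_inj0 ?pcomp0l //.
by apply: contra hk => /eqP /mulIg ->.
Qed.

Lemma projbD1 g :
  pcomp (bp_proj B g) (bD g) = fmap (pa g) (pcomp (pa_e pa C) (bp_proj B 1%g)).
Proof.
by rewrite -(cast_proj _ (mul1g g)) -pcompA projbD pcompA pa_unit_l fmapC.
Qed.

Lemma proj_ext_g g (Y : A') (u v : phom A' Y (bp_obj B)) :
  (forall k, pcomp (bp_proj B (k * g)%g) u = pcomp (bp_proj B (k * g)%g) v) -> u = v.
Proof.
move=> H; apply: bp_ext => x.
have e : (x * g^-1 * g)%g = x by rewrite -mulgA mulVg mulg1.
by rewrite -(cast_proj _ e) -!pcompA H.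
Qed.

Lemma bD_iso g : is_iso (C := PCat A') (bD g).
Proof.
exists (bDinv g); split => /=.
- rewrite /bDinv pcomp_suml -(fmap1 (pa g)) -(bp_sum B) (fmap_sum (pa_add pa g)).
  apply: eq_bigr => h _.
  rewrite -pcompA -pcompA projbD (pcompA (cinv h g) (pa_c pa h g C)) invofK pcomp1f.
  by rewrite fmapC.
- apply: (proj_ext_g (g:=g)) => k.
  rewrite pcompf1 pcompA projbD /bDinv pcomp_sumr (bigD1 k) //=.
  rewrite big1 ?addr0 => [|h hk].
    rewrite -pcompA (pcompA (fmap (pa g) (bp_proj B k) : phom A' _ _)) -fmapC bp_projinj fmap1.
    by rewrite pcomp1f pcompA invofK' pcomp1f.
  rewrite -pcompA (pcompA (fmap (pa g) (bp_proj B k) : phom A' _ _)) -fmapC bp_proj_inj0.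
    by rewrite (fmap0 (pa_add pa g)) pcomp0l pcomp0r.
  by rewrite eq_sym.
Qed.

Lemma bD_coc g h :
  pcomp (bD h) (fmap (pa h) (bD g) : phom A' _ _) = pcomp (bD (g * h)%g) (pa_c pa g h (bp_obj B)).
Proof.
apply: (proj_ext_g (g:=(g * h)%g)) => k.
rewrite [RHS]pcompA projbD -[RHS]pcompA pa_c_nat.
rewrite -[in LHS](cast_proj _ (esym (mulgA k g h))) -[LHS]pcompA.
rewrite (pcompA (bp_proj B (k * g * h)%g)) projbD -(pcompA (pa_c pa (k * g)%g h C)).
rewrite -fmapC projbD fmapC pA3 pa_assoc.
by rewrite pcompA.
Qed.

Definition DC : ddatum pa := @Build_ddatum _ _ pa (bp_obj B) bD bD_iso bD_coc.

Definition Phi (a : A) (x : phom A' (f a) C) : phom A' (f a) (bp_obj B) :=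
  \sum_h pcomp (bp_inj B h) (pcomp (fmap (pa h) x) (eq_iinv E h a)).

Lemma proj_Phi a x h : pcomp (bp_proj B h) (@Phi a x) = pcomp (fmap (pa h) x) (eq_iinv E h a).
Proof. exact: bp_proj_sum. Qed.

Lemma Phi_dd a x g :
  pcomp (@Phi a x) (eq_i E g a) = pcomp (bD g) (fmap (pa g) (@Phi a x) : phom A' _ _).
Proof.
apply: (proj_ext_g (g:=g)) => k.
rewrite pcompA proj_Phi [RHS]pcompA projbD -[RHS]pcompA -fmapC proj_Phi fmapC.
rewrite [RHS]pcompA -pa_c_nat -[RHS]pcompA c_iinv'.
by rewrite pcompA.
Qed.

Definition Phid a x : ddhom (hat_obj E a) DC := exist _ (@Phi a x) (Phi_dd x).

Lemma dd_uniq a (Psi : ddhom (hat_obj E a) DC) :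
  proj1_sig Psi = Phi (pcomp (pa_e pa C) (pcomp (bp_proj B 1%g) (proj1_sig Psi))).
Proof.
apply: bp_ext => h; rewrite proj_Phi.
apply: (iso_cancelr (i_iso E h a)).
rewrite -pcompA eq_i_inv1 pcompf1 -pcompA (proj2_sig Psi h) /= pcompA projbD1.
by rewrite -fmapC pcompA.
Qed.

End DC.

Definition epsA (C : A') : phom A' (f (Q (DC C))) C :=
  pcomp (pa_e pa C) (pcomp (bp_proj (bp C) 1%g) (proj1_sig (bet (DC C)))).

Definition tpA (a : A) (C : A') (x : phom A' (f a) C) : phom A a (Q (DC C)) :=
  pre (ddcomp (betinv (DC C)) (Phid x)).

Lemma tpA_spec a C (x : phom A' (f a) C) :
  pcomp (epsA C) (fmap f (tpA x) : phom A' _ _) = x.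
Proof.
rewrite /tpA pre_spec /= /epsA -!pcompA.
have -> : pcomp (sval (bet (DC C))) (pcomp (sval (betinv (DC C))) (Phi x)) = Phi x.
  by rewrite pcompA bet_inv2 pcomp1f.
rewrite proj_Phi pcompA -pa_e_nat -pcompA -(i1e E) eq_i_inv2.
exact: pcompf1.
Qed.

Lemma tpA_uniq a C (x : phom A' (f a) C) (y : phom A a (Q (DC C))) :
  pcomp (epsA C) (fmap f y : phom A' _ _) = x -> y = tpA x.
Proof.
move=> hy; apply: faithful; rewrite /tpA pre_spec /=.
have := dd_uniq (ddcomp (bet (DC C)) (hat_map E y)) => /=.
rewrite pA3 -/(epsA C) hy => e.
rewrite -e.
have -> : pcomp (sval (betinv (DC C))) (pcomp (sval (bet (DC C))) (fmap f y : phom A' _ _)) = fmap f y.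
  by rewrite pcompA bet_inv1 pcomp1f.
by [].
Qed.

Definition GA : Functor (PCat A') (PCat A) := UAF tpA_spec tpA_uniq.
Definition adjA : adjunction f GA := UAadj tpA_spec tpA_uniq.

Lemma kappa_proj g C :
  kappa_comp E adjA g C = pcomp (bp_proj (bp C) g) (proj1_sig (bet (DC C))).
Proof.
apply: (iso_cancelr (i_iso E g (Q (DC C)))).
rewrite (kappa_i E adjA) -pcompA (proj2_sig (bet (DC C)) g) /= pcompA projbD1.
by rewrite /epsA [in LHS]pcompA [in LHS]fmapC.
Qed.

Lemma iso_comp (X Y Z : A') (u : phom A' Y Z) (v : phom A' X Y) :
  is_iso (C := PCat A') u -> is_iso (C := PCat A') v -> is_iso (C := PCat A') (pcomp u v).
Proof.
case=> u' [u1 u2] [v' [v1 v2]]; exists (pcomp v' u'); split => /=.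
all: have u1' : pcomp u' u = pid _ := u1; have u2' : pcomp u u' = pid _ := u2.
all: have v1' : pcomp v' v = pid _ := v1; have v2' : pcomp v v' = pid _ := v2.
- by rewrite -pcompA (pcompA u') u1' pcomp1f v1'.
- by rewrite -pcompA (pcompA v) v2' pcomp1f u2'.
Qed.

Lemma cartA : cartesian E adjA.
Proof.
move=> C B'.
have -> : \sum_g pcomp (bp_inj B' g) (kappa_comp E adjA g C)
    = pcomp (\sum_g pcomp (bp_inj B' g) (bp_proj (bp C) g)) (proj1_sig (bet (DC C))).
  rewrite pcomp_suml; apply: eq_bigr => g _.
  by rewrite kappa_proj pcompA.
apply: iso_comp.
- exists (\sum_g pcomp (bp_inj (bp C) g) (bp_proj B' g)); split => /=.
  + by apply: bp_ext_l => g; rewrite pcomp1f -pcompA !bp_sum_inj.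
  + by apply: bp_ext_l => g; rewrite pcomp1f -pcompA !bp_sum_inj.
- by exists (proj1_sig (betinv (DC C))); split; [exact: (bet_inv1 (DC C)) | exact: (bet_inv2 (DC C))].
Qed.

Definition zA (a : A) : ddhom (hat_obj E (GA (f a))) (hat_obj E a) :=
  exist _ (sik E adjA a) (sik_dd E adjA a).

Definition trA (a : A) : phom A (GA (f a)) a := pre (zA a).

Lemma traceA : trace_structure E adjA trA.
Proof.
split; [|split].
- move=> a b phi /=; apply: faithful.
  rewrite [in LHS]fmapC [in RHS]fmapC /trA (pre_spec (zA a)) (pre_spec (zA b)) /=.
  exact: (sik_nat E adjA phi).
- move=> a; apply: faithful; rewrite fmapC pre_spec /=.
  by rewrite (sik_eta E adjA) (fmapMn hf) fmap1.
- by move=> a; rewrite pre_spec.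
Qed.

Lemma partA : exists (G : Functor (PCat A') (PCat A)) (adj : adjunction f G),
  cartesian E adj /\ exists tr, trace_structure E adj tr.
Proof. by exists GA, adjA; split; [exact: cartA | exists trA; exact: traceA]. Qed.

End PartA.

Theorem proposition2p11 (Gam : finGroupType) (A A' : PreAdd)
  (hA : additive_cat A) (hA' : additive_cat A')
  (pa : pseudo_action Gam A')
  (f : Functor (PCat A) (PCat A')) (hf : additive_functor f)
  (E : equivariance pa f) :
  (has_descent E ->
     exists (G : Functor (PCat A') (PCat A)) (adj : adjunction f G),
       cartesian E adj /\ exists tr, trace_structure E adj tr)
  /\
  (pseudo_abelian A -> Zinv_linear #|Gam| A ->
     forall (G : Functor (PCat A') (PCat A)) (adj : adjunction f G),
       cartesian E adj ->
       forall tr, trace_structure E adj tr -> has_descent E).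
Proof.
split.
- move=> hd.
  have [full faith] := equiv_ff hd.
  case: hd => Q [_ [bt [_ bti]]].
  pose bp (C : A') := choose_inh (hA' _ (fun g => pa g C)).
  pose betinv D := invofC (bti D).
  pose pre a b (z : ddhom (hat_obj E a) (hat_obj E b)) :=
    proj1_sig (constructive_indefinite_description _ (full a b z)).
  apply: (@partA _ _ _ pa f hf E bp Q bt betinv _ _ pre).
  + by move=> D; exact: (congr1 (@proj1_sig _ _) (invofCK (bti D))).
  + by move=> D; exact: (congr1 (@proj1_sig _ _) (invofCK' (bti D))).
  + move=> a b z.
    exact: (congr1 (@proj1_sig _ _) (proj2_sig (constructive_indefinite_description _ (full a b z)))).
  + by move=> a b y y' e; apply: faith; apply: sig_eqP.
- move=> hpa hZ G adj hcart tr htr.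
  exact: (partB hA' hf hpa hZ hcart htr).
Qed.
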